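(* Let $\mathcal{L}$ and $T$ be as in the context, let $X$ be an $\exists$-simple set and let $f\colon X\to\mathrm{VF}$ be $\exists$-strongly definable. Then the function \[X\setminus\{x\mid f(x)=0\}\to\mathrm{VF},\qquad x\mapsto\frac{1}{f(x)}\] is $\exists$-strongly definable.
   Context: $\mathcal{L}_{\mathrm{RV}}$ is the multisorted language with sorts $\mathrm{VF}$ (valued field) and $\mathrm{RV}_N$ ($N\ge1$), where for a valued field $K$ with valuation ring $\mathcal{O}_K$ and maximal ideal $\mathcal{M}_K$, $\mathrm{RV}_N=K^\times/(1+N\mathcal{M}_K)\cup\{0\}$; it contains the ring language on $\mathrm{VF}$, multiplication, constants $0,1$, a divisibility relation $\mid$ (comparison of valuations) and a partial-addition relation $\oplus$ on each $\mathrm{RV}_N$, the projections $\mathrm{rv}_N\colon\mathrm{VF}\to\mathrm{RV}_N$, $\mathrm{rv}_{N,M}\colon\mathrm{RV}_M\to\mathrm{RV}_N$ ($N\mid M$), and Hensel-lift relation symbols $P_{N,d}$ on $\mathrm{RV}_N\times\mathrm{RV}_{N^2}^{d+1}$. $\mathcal{L}$ is an expansion of $\mathcal{L}_{\mathrm{RV}}$ by constants and by function and relation symbols not involving $\mathrm{VF}$, and $T$ is an $\mathcal{L}$-theory containing the theory of nontrivially valued Henselian valued fields of characteristic zero. Definable sets/functions are those defined by $\mathcal{L}$-formulas in all models of $T$; formulas are equivalent if equivalent modulo $T$; a definable function has domain exactly its stated domain. An $\exists$-simple formula is one of the form $(\exists\xi\in\mathrm{RV}_{n_1}\times\dots\times\mathrm{RV}_{n_r})\psi(x,\xi)$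 with $\psi$ quantifier-free; an $\exists$-simple set is one defined by such a formula. If the graph of $f$ is given by $\varphi(x,y)$, then for a formula $\psi(y,z)$, $\psi(f(x),z)$ abbreviates $\exists y(\varphi(x,y)\wedge\psi(y,z))$. For $X$ $\exists$-simple, a definable $f\colon X\to Y$ is $\exists$-strongly definable if for every $\exists$-simple formula $\psi(y,z)$ there is an $\exists$-simple formula $\chi(x,z)$ such that $\psi(f(x),z)$ is equivalent to $\chi(x,z)$. *)

(* Defs.v *)
From HB Require Import structures.
From mathcomp Require Import all_boot all_algebra.
Set Implicit Arguments. Unset Strict Implicit. Unset Printing Implicit Defensive.
Import GRing.Theory.
Local Open Scope ring_scope.

(* Convention: [RVs N] is the sort RV_{N+1}; so RV_1, RV_2, ... are
   RVs 0, RVs 1, ...  (the paper only has RV_N for N >= 1). *)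
Inductive sort := VFs | RVs of nat.

Definition sort_code (s : sort) : option nat :=
  match s with VFs => None | RVs n => Some n end.
Definition code_sort (o : option nat) : sort :=
  match o with None => VFs | Some n => RVs n end.
Lemma sort_codeK : cancel sort_code code_sort. Proof. by case. Qed.
HB.instance Definition _ := Equality.copy sort (can_type sort_codeK).

Definition var := (sort * nat)%type.

(* index of RV_{N^2} when RVs N is RV_{N+1} *)
Definition sqidx (N : nat) : nat := ((N.+1) ^ 2).-1.

(* An expansion of L_RV by constants, function and relation symbols not
   involving VF: every argument/result sort is an RV sort (given by its index);
   constants are 0-ary function symbols. *)
Record lang := Lang {
  fsym : Type; fdom : fsym -> seq nat; fcod : fsym -> nat;
  rsym : Type; rdom : rsym -> seq nat }.

Section Syntax.
Variable L : lang.

Inductive term : sort -> Type :=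
| Var (s : sort) (i : nat) : term s
| VZero : term VFs
| VOne : term VFs
| VAdd (a b : term VFs) : term VFs
| VOpp (a : term VFs) : term VFs
| VMul (a b : term VFs) : term VFs
| RZero (N : nat) : term (RVs N)
| ROne (N : nat) : term (RVs N)
| RMul (N : nat) (a b : term (RVs N)) : term (RVs N)
| Rv (N : nat) (t : term VFs) : term (RVs N)
| RvNM (N M : nat) (t : term (RVs M)) (h : (N.+1 %| M.+1)%N) : term (RVs N)
| Fun (g : fsym L) (ts : terms (map RVs (fdom g))) : term (RVs (fcod g))
with terms : seq sort -> Type :=
| TNil : terms [::]
| TCons (s : sort) (ss : seq sort) (t : term s) (ts : terms ss) : terms (s :: ss).

Inductive formula : Type :=
| FTrue | FFalse
| FEq (s : sort) (a b : term s)
| FDiv (N : nat) (a b : term (RVs N))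
| FOplus (N : nat) (a b c : term (RVs N))
| FHens (N d : nat) (a : term (RVs N)) (bs : terms (nseq d.+1 (RVs (sqidx N))))
| FRel (r : rsym L) (ts : terms (map RVs (rdom r)))
| FNot (p : formula) | FAnd (p q : formula) | FOr (p q : formula)
| FEx (s : sort) (i : nat) (p : formula)
| FAll (s : sort) (i : nat) (p : formula).

Fixpoint fvt (s : sort) (t : term s) {struct t} : seq var :=
  match t with
  | Var s i => [:: (s, i)]
  | VZero | VOne | RZero _ | ROne _ => [::]
  | VAdd a b | VMul a b | RMul _ a b => fvt a ++ fvt b
  | VOpp a | Rv _ a | RvNM _ _ a _ => fvt a
  | Fun _ ts => fvts ts
  end
with fvts (ss : seq sort) (ts : terms ss) {struct ts} : seq var :=
  match ts with
  | TNil => [::]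
  | TCons _ _ t ts => fvt t ++ fvts ts
  end.

Fixpoint fv (p : formula) : seq var :=
  match p with
  | FTrue | FFalse => [::]
  | FEq _ a b | FDiv _ a b => fvt a ++ fvt b
  | FOplus _ a b c => fvt a ++ fvt b ++ fvt c
  | FHens _ _ a bs => fvt a ++ fvts bs
  | FRel _ ts => fvts ts
  | FNot p => fv p
  | FAnd p q | FOr p q => fv p ++ fv q
  | FEx s i p | FAll s i p => [seq v <- fv p | v != (s, i)]
  end.

Fixpoint qf (p : formula) : bool :=
  match p with
  | FNot p => qf p
  | FAnd p q | FOr p q => qf p && qf q
  | FEx _ _ _ | FAll _ _ _ => false
  | _ => true
  end.

Fixpoint esimple (p : formula) : bool :=
  match p with
  | FEx (RVs _) _ q => esimple q
  | _ => qf p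
  end.

End Syntax.

Definition in_max (K : fieldType) (O : pred K) (x : K) : bool :=
  O x && ((x == 0) || ~~ O x^-1).

Record hvf := HVF {
  hK : fieldType;
  hO : pred hK;
  hO1 : hO 1;
  hOD : forall x y, hO x -> hO y -> hO (x + y);
  hON : forall x, hO x -> hO (- x);
  hOM : forall x y, hO x -> hO y -> hO (x * y);
  hOval : forall x, x != 0 -> hO x \/ hO x^-1;
  hnontriv : exists x, ~~ hO x;
  hchar0 : forall n, (n.+1)%:R != 0 :> hK;
  hhensel : forall (p : {poly hK}) (a : hK),
      (forall i, hO p`_i) -> hO a -> in_max hO p.[a] -> ~~ in_max hO (p^`()).[a] ->
      exists b, [/\ hO b, p.[b] = 0 & in_max hO (b - a)]
}.

(* x and y have the same image in RV_{N+1} = K^x/(1+(N+1)M) u {0} *)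
Definition rv_eq (F : hvf) (N : nat) (x y : hK F) : Prop :=
  (x = 0 /\ y = 0) \/
  [/\ x != 0, y != 0 & in_max (@hO F) ((x / y - 1) / (N.+1)%:R)].

Fixpoint rv_eqs (F : hvf) (Ns : seq nat) (xs ys : seq (hK F)) : Prop :=
  match Ns, xs, ys with
  | [::], [::], [::] => True
  | N :: Ns', x :: xs', y :: ys' => rv_eq N x y /\ rv_eqs Ns' xs' ys'
  | _, _, _ => False
  end.

(* Every sort is represented by the field K: VF literally, and RV_{N+1} by
   representatives modulo rv_eq N (the class of 0 being {0}). *)
Record structure (L : lang) := Str {
  sF : hvf;
  fint : fsym L -> seq (hK sF) -> hK sF;
  rint : rsym L -> seq (hK sF) -> Prop;
  fcongr : forall g xs ys, rv_eqs (fdom g) xs ys -> rv_eq (fcod g) (fint g xs) (fint g ys);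
  rcongr : forall r xs ys, rv_eqs (rdom r) xs ys -> (rint r xs <-> rint r ys)
}.

Section Semantics.
Variables (L : lang) (M : structure L).
Local Notation K := (hK (sF M)).
Local Notation O := (@hO (sF M)).

Definition env := sort -> nat -> K.
Definition upd (e : env) (s : sort) (i : nat) (a : K) : env :=
  fun s' j => if (s', j) == (s, i) then a else e s' j.

Fixpoint eval (e : env) (s : sort) (t : term L s) {struct t} : K :=
  match t with
  | Var s i => e s i
  | VZero => 0 | VOne => 1
  | VAdd a b => eval e a + eval e b
  | VOpp a => - eval e a
  | VMul a b => eval e a * eval e b
  | RZero _ => 0 | ROne _ => 1
  | RMul _ a b => eval e a * eval e b
  | Rv _ a => eval e a
  | RvNM _ _ a _ => eval e a
  | Fun g ts => fint g (evals e ts)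
  end
with evals (e : env) (ss : seq sort) (ts : terms L ss) {struct ts} : seq K :=
  match ts with
  | TNil => [::]
  | TCons _ _ t ts => eval e t :: evals e ts
  end.

Definition sort_eq (s : sort) (x y : K) : Prop :=
  match s with VFs => x = y | RVs N => rv_eq N x y end.

Fixpoint sat (e : env) (p : formula L) : Prop :=
  match p with
  | FTrue => True
  | FFalse => False
  | FEq s a b => sort_eq s (eval e a) (eval e b)
  | FDiv _ a b => exists c, O c /\ eval e b = c * eval e a
  | FOplus N a b c => exists x y,
      [/\ rv_eq N x (eval e a), rv_eq N y (eval e b) & rv_eq N (x + y) (eval e c)]
  | FHens N d a bs => exists (x : K) (cs : seq K),
      [/\ rv_eq N x (eval e a), rv_eqs (nseq d.+1 (sqidx N)) cs (evals e bs)
        & \sum_(i < d.+1) cs`_i * x ^+ i = 0]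
  | FRel r ts => rint r (evals e ts)
  | FNot p => ~ sat e p
  | FAnd p q => sat e p /\ sat e q
  | FOr p q => sat e p \/ sat e q
  | FEx s i p => exists a : K, sat (upd e s i a) p
  | FAll s i p => forall a : K, sat (upd e s i a) p
  end.

End Semantics.

Definition models (L : lang) (T : formula L -> Prop) (M : structure L) : Prop :=
  forall p, T p -> forall e : env M, sat e p.

Definition defines_fun (L : lang) (T : formula L -> Prop) (xs : seq var)
    (theta phi : formula L) (y : nat) : Prop :=
  [/\ (VFs, y) \notin xs, {subset fv theta <= xs}, {subset fv phi <= (VFs, y) :: xs} &
   forall M : structure L, models T M -> forall e : env M,
     (sat e theta <-> exists b, sat (upd e VFs y b) phi) /\
     (forall b b', sat (upd e VFs y b) phi -> sat (upd e VFs y b') phi -> b = b')].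

(* The function with graph phi (domain defined by theta) is
   exists-strongly definable: theta is exists-simple, and for every
   exists-simple psi(y', z) there is an exists-simple chi(x, z) with
   psi(f(x), z) := (exists y, phi(x,y) /\ psi(y,z)) equivalent to chi(x,z)
   modulo T. *)
Definition estrongly_def (L : lang) (T : formula L -> Prop) (xs : seq var)
    (theta phi : formula L) (y : nat) : Prop :=
  [/\ esimple theta, defines_fun T xs theta phi y &
   forall (psi : formula L) (y' : nat), esimple psi ->
     exists chi : formula L,
       [/\ esimple chi,
           {subset fv chi <= xs ++ [seq v <- fv psi | v != (VFs, y')]} &
           forall M : structure L, models T M -> forall e : env M,
             sat e chi <->
             exists b, sat (upd e VFs y b) phi /\ sat (upd e VFs y' b) psi]].

(* Main.v *)
Require Import Defs.
From mathcomp Require Import all_boot all_algebra.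
From mathcomp Require Import ring.
Set Implicit Arguments. Unset Strict Implicit. Unset Printing Implicit Defensive.
Import GRing.Theory.
Local Open Scope ring_scope.

Section Val.
Variable F : hvf.
Local Notation K := (hK F).
Local Notation O := (@hO F).
Local Notation mx := (in_max (@hO F)).

Lemma O1 : O 1. Proof. exact: hO1. Qed.
Lemma O0 : O 0. Proof. by rewrite -(subrr (1:K)); apply: hOD; [exact: O1|apply: hON; exact: O1]. Qed.
Lemma ON1 : O (-1). Proof. by apply: hON; exact: O1. Qed.
Lemma On n : O n%:R.
Proof. elim: n => [|n IH]; first exact: O0. by rewrite -addn1 natrD; apply: hOD => //; exact: O1. Qed.

Lemma mxO x : mx x -> O x. Proof. by case/andP. Qed.
Lemma mx0 : mx 0. Proof. by rewrite /in_max O0 eqxx. Qed.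
Lemma mxM x z : mx x -> O z -> mx (z * x).
Proof.
case/andP=> Ox /orP[/eqP->|nOx] Oz; first by rewrite mulr0 mx0.
rewrite /in_max hOM //=; case: (eqVneq z 0) => [->|nz]; first by rewrite mul0r eqxx.
have nx : x != 0 by apply/negP=> /eqP x0; move: nOx; rewrite x0 invr0 O0.
rewrite mulf_eq0 (negPf nz) (negPf nx) /=; apply/negP=> Oi.
move/negP: nOx; apply; have -> : x^-1 = z * (z * x)^-1 by rewrite invfM mulrA mulfV // mul1r.
exact: hOM.
Qed.
Lemma mxD x y : mx x -> mx y -> mx (x + y).
Proof.
move=> mxx mxy; case: (eqVneq x 0) => [->|nx]; first by rewrite add0r.
case: (eqVneq y 0) => [->|ny]; first by rewrite addr0.
have [Oq|Oq] := hOval (mulf_neq0 nx (invr_neq0 ny)).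
  have -> : x + y = (x / y + 1) * y by rewrite mulrDl mul1r mulfVK.
  by apply: mxM => //; apply: hOD => //; exact: O1.
have -> : x + y = (y / x + 1) * x by rewrite mulrDl mul1r mulfVK // addrC.
apply: mxM => //; apply: hOD; last exact: O1.
by move: Oq; rewrite invfM invrK mulrC.
Qed.
Lemma mxN x : mx x -> mx (- x).
Proof. by move=> h; rewrite -mulN1r; apply: mxM => //; exact: ON1. Qed.

Lemma unit1m m : mx m -> 1 + m != 0 /\ O (1 + m)^-1.
Proof.
move=> mm.
have nz : 1 + m != 0.
  apply/negP=> /eqP h; have hm : m = -1 by rewrite -[m](addKr 1) h addr0.
  by move: mm; rewrite hm /in_max oppr_eq0 oner_eq0 invrN invr1 ON1.
split=> //; have [O1m|//] := hOval nz.
case Oi: (O (1 + m)^-1) => //.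
have m1 : mx (1 + m) by rewrite /in_max O1m Oi orbT.
have := mxD m1 (mxN mm); rewrite addrK /in_max invr1 O1 oner_eq0.
by [].
Qed.

Variable N : nat.
Local Notation n1 := ((N.+1)%:R : K).
Lemma n1nz : n1 != 0. Proof. exact: hchar0. Qed.

Lemma rv_eqE x y : rv_eq N x y <->
  (x = 0 /\ y = 0) \/ [/\ x != 0, y != 0 & exists2 a, mx a & x = y * (1 + n1 * a)].
Proof.
have nn := n1nz.
split=> [[h|[nx ny ma]]|[h|[nx ny [a ma ex]]]]; [by left| |by left|].
  right; split=> //; exists ((x / y - 1) / n1) => //.
  by rewrite (mulrC n1) divfK // addrC subrK mulrC divfK.
right; split=> //; rewrite ex.
have -> : (y * (1 + n1 * a) / y - 1) / n1 = a.
  by field; move: nn; rewrite -addn1 natrD addrC => ->; rewrite ny.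
by [].
Qed.

Lemma rv_refl (x : K) : rv_eq N x x.
Proof.
apply/rv_eqE; case: (eqVneq x 0) => [->|nx]; [by left|right].
by split=> //; exists 0; [exact: mx0|rewrite mulr0 addr0 mulr1].
Qed.

Lemma mx_n1 a : mx a -> mx (n1 * a).
Proof. by move=> h; apply: mxM => //; exact: On. Qed.

Lemma rv_sym (x y : K) : rv_eq N x y -> rv_eq N y x.
Proof.
move/rv_eqE=> [[-> ->]|[nx ny [a ma ex]]]; apply/rv_eqE; first by left.
right; split=> //.
have [nz Oi] := unit1m (mx_n1 ma).
exists (- (1 + n1 * a)^-1 * a).
  by apply: mxM => //; apply: hON.
have gen : forall u c : K, u != 0 -> u * (1 + (- u^-1 * (u - 1))) = 1.
  by move=> u c nu; field.
rewrite ex -mulrA (mulrCA n1).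
have hu : n1 * a = (1 + n1 * a) - 1 by rewrite addrC addKr.
set u := 1 + n1 * a in nz hu *.
by rewrite hu gen // mulr1.
Qed.

Lemma rv_trans (x y z : K) : rv_eq N x y -> rv_eq N y z -> rv_eq N x z.
Proof.
move/rv_eqE=> [[-> ->]|[nx ny [a ma ex]]] /rv_eqE [[ey ez]|[ny' nz [b mb ey]]].
- by apply/rv_eqE; left.
- by move: ny'; rewrite eqxx.
- by move: ny; rewrite ey eqxx.
apply/rv_eqE; right; split=> //; exists (a + b + n1 * a * b).
  by apply: mxD; [apply: mxD|rewrite -mulrA; apply: mx_n1; rewrite mulrC; apply: mxM => //; exact: mxO].
by rewrite ex ey; ring.
Qed.

Lemma rv_mul (x y x' y' : K) : rv_eq N x y -> rv_eq N x' y' -> rv_eq N (x * x') (y * y').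
Proof.
move/rv_eqE=> [[-> ->]|[nx ny [a ma ex]]]; first by move=> _; rewrite !mul0r; exact: rv_refl.
move/rv_eqE=> [[-> ->]|[nx' ny' [b mb ex']]]; first by rewrite !mulr0; exact: rv_refl.
apply/rv_eqE; right; split; try by rewrite mulf_neq0.
exists (a + b + n1 * a * b).
  by apply: mxD; [apply: mxD|rewrite -mulrA; apply: mx_n1; rewrite mulrC; apply: mxM => //; exact: mxO].
by rewrite ex ex'; ring.
Qed.

Lemma rv_unit (x y : K) : rv_eq N x y -> exists u, [/\ u != 0, O u, O u^-1 & x = u * y].
Proof.
move/rv_eqE=> [[-> ->]|[nx ny [a ma ex]]].
  by exists 1; rewrite oner_eq0 invr1 mulr0; split=> //; exact: O1.
have [nz Oi] := unit1m (mx_n1 ma).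
exists (1 + n1 * a); split=> //.
  by apply: hOD; [exact: O1|apply: mxO; exact: mx_n1].
by rewrite ex mulrC.
Qed.

Lemma rv_div (a a' b b' : K) : rv_eq N a' a -> rv_eq N b' b ->
  (exists c, O c /\ b = c * a) -> exists c, O c /\ b' = c * a'.
Proof.
move=> /rv_unit [u [nu Ou Oiu ea]] /rv_unit [v [nv Ov Oiv eb]] [c [Oc ebc]].
exists (v * c * u^-1); split; first by rewrite !hOM.
by rewrite eb ebc ea -!mulrA mulKf.
Qed.
End Val.

Lemma rv_lower (F : hvf) N M' (x y : hK F) : rv_eq M' x y -> (N.+1 %| M'.+1)%N -> rv_eq N x y.
Proof.
move=> /rv_eqE [[-> ->]|[nx ny [a ma ex]]] /dvdnP [q hq].
  by apply/rv_eqE; left.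
apply/rv_eqE; right; split=> //; exists (q%:R * a).
  by apply: mxM => //; exact: On.
by rewrite ex hq natrM mulrA (mulrC _ (q%:R)).
Qed.

Scheme term_mut := Induction for term Sort Prop
with terms_mut := Induction for terms Sort Prop.

Section Tr.
Variables (L : lang) (yv k : nat).

Fixpoint vpow n : term L VFs :=
  match n with 0 => VOne L | n.+1 => VMul (Var L VFs yv) (vpow n) end.
Fixpoint rpow N (a : term L (RVs N)) n : term L (RVs N) :=
  match n with 0 => ROne L N | n.+1 => RMul a (rpow a n) end.

Fixpoint deg s (t : term L s) : nat :=
  match t with
  | Var s i => if (s == VFs) && (i == yv) then 1%N else 0%N
  | VAdd a b | VMul a b => (deg a + deg b)%N
  | VOpp a => deg a
  | _ => 0%N
  end.

Fixpoint tr s (t : term L s) {struct t} : term L s :=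
  match t in term _ s0 return term L s0 with
  | Var s i => match s as s0 return term L s0 with
      | VFs => if i == yv then VOne L else Var L VFs i
      | RVs N => Var L (RVs N) i end
  | VZero => VZero L
  | VOne => VOne L
  | VAdd a b => VAdd (VMul (vpow (deg b)) (tr a)) (VMul (vpow (deg a)) (tr b))
  | VOpp a => VOpp (tr a)
  | VMul a b => VMul (tr a) (tr b)
  | RZero N => RZero L N
  | ROne N => ROne L N
  | RMul N a b => RMul (tr a) (tr b)
  | Rv N a => RMul (Rv N (tr a)) (rpow (Var L (RVs N) k) (deg a))
  | RvNM N M a h => RvNM (tr a) h
  | Fun g ts => Fun (trs ts)
  end
with trs ss (ts : terms L ss) {struct ts} : terms L ss :=
  match ts in terms _ ss0 return terms L ss0 with
  | TNil => TNil L
  | TCons s ss t ts => TCons (tr t) (trs ts)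
  end.

Fixpoint tNs s (t : term L s) {struct t} : seq nat :=
  match t with
  | Rv N a => N :: tNs a
  | VAdd a b | VMul a b | RMul _ a b => tNs a ++ tNs b
  | VOpp a | RvNM _ _ a _ => tNs a
  | Fun _ ts => tsNs ts
  | _ => [::]
  end
with tsNs ss (ts : terms L ss) {struct ts} : seq nat :=
  match ts with TNil => [::] | TCons _ _ t ts => tNs t ++ tsNs ts end.

Fixpoint tidx s (t : term L s) {struct t} : nat :=
  match t with
  | Var _ i => i.+1
  | VAdd a b | VMul a b | RMul _ a b => maxn (tidx a) (tidx b)
  | VOpp a | RvNM _ _ a _ | Rv _ a => tidx a
  | Fun _ ts => tsidx ts
  | _ => 0%N
  end
with tsidx ss (ts : terms L ss) {struct ts} : nat :=
  match ts with TNil => 0%N | TCons _ _ t ts => maxn (tidx t) (tsidx ts) end.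

Fixpoint fNs (p : formula L) : seq nat :=
  match p with
  | FEq _ a b | FDiv _ a b => tNs a ++ tNs b
  | FOplus _ a b c => tNs a ++ tNs b ++ tNs c
  | FHens _ _ a bs => tNs a ++ tsNs bs
  | FRel _ ts => tsNs ts
  | FNot p => fNs p
  | FAnd p q | FOr p q => fNs p ++ fNs q
  | FEx _ _ p | FAll _ _ p => fNs p
  | _ => [::]
  end.

Fixpoint fidx (p : formula L) : nat :=
  match p with
  | FEq _ a b | FDiv _ a b => maxn (tidx a) (tidx b)
  | FOplus _ a b c => maxn (tidx a) (maxn (tidx b) (tidx c))
  | FHens _ _ a bs => maxn (tidx a) (tsidx bs)
  | FRel _ ts => tsidx ts
  | FNot p => fidx p
  | FAnd p q | FOr p q => maxn (fidx p) (fidx q)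
  | FEx _ i p | FAll _ i p => maxn i.+1 (fidx p)
  | _ => 0%N
  end.

Fixpoint trq (p : formula L) : formula L :=
  match p with
  | FEq s a b =>
      (match s as s0 return term L s0 -> term L s0 -> formula L with
       | VFs => fun a b => FEq (VMul (vpow (deg b)) (tr a)) (VMul (vpow (deg a)) (tr b))
       | RVs N => fun a b => FEq (tr a) (tr b) end) a b
  | FDiv N a b => FDiv (tr a) (tr b)
  | FOplus N a b c => FOplus (tr a) (tr b) (tr c)
  | FHens N d a bs => FHens (tr a) (trs bs)
  | FRel r ts => FRel (trs ts)
  | FNot p => FNot (trq p)
  | FAnd p q => FAnd (trq p) (trq q)
  | FOr p q => FOr (trq p) (trq q)
  | p => p
  end.

Fixpoint exl (Ns : seq nat) (body : formula L) : formula L :=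
  match Ns with [::] => body | N :: Ns => FEx (RVs N) k (exl Ns body) end.

Fixpoint cons_f (Ns : seq nat) : formula L :=
  match Ns with
  | [::] => FTrue L
  | N :: Ns => FAnd (FEq (RMul (Var L (RVs N) k) (Rv N (Var L VFs yv))) (ROne L N)) (cons_f Ns)
  end.

Definition base (p : formula L) : formula L :=
  exl (fNs p) (FAnd (FNot (FEq (Var L VFs yv) (VZero L))) (FAnd (cons_f (fNs p)) (trq p))).

Fixpoint Tr (p : formula L) : formula L :=
  match p with
  | FEx s i q => match s with RVs n => FEx (RVs n) i (Tr q) | VFs => base p end
  | _ => base p
  end.

End Tr.

Definition srel (F : hvf) (s : Defs.sort) (x y : hK F) : Prop :=
  match s with VFs => True | RVs N => rv_eq N x y end.

Fixpoint trel (F : hvf) (ss : seq Defs.sort) (xs ys : seq (hK F)) : Prop :=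
  match ss, xs, ys with
  | [::], [::], [::] => True
  | s :: ss, x :: xs, y :: ys => srel s x y /\ trel ss xs ys
  | _, _, _ => False
  end.

Lemma trel_map (F : hvf) Ns (xs ys : seq (hK F)) : trel (map RVs Ns) xs ys -> rv_eqs Ns xs ys.
Proof. by elim: Ns xs ys => [|N Ns IH] [|x xs] [|y ys] //= [h1 /IH]. Qed.

Lemma rv_eqs_sym (F : hvf) Ns (xs ys : seq (hK F)) : rv_eqs Ns xs ys -> rv_eqs Ns ys xs.
Proof. by elim: Ns xs ys => [|N Ns IH] [|x xs] [|y ys] //= [h1 /IH]; split=> //; exact: rv_sym. Qed.

Lemma rv_eqs_trans (F : hvf) Ns (xs ys zs : seq (hK F)) :
  rv_eqs Ns xs ys -> rv_eqs Ns ys zs -> rv_eqs Ns xs zs.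
Proof.
elim: Ns xs ys zs => [|N Ns IH] [|x xs] [|y ys] [|z zs] //= [h1 h2] [h3 h4].
by split; [exact: rv_trans h1 h3|exact: IH h2 h4].
Qed.

Lemma rv_pow1 (F : hvf) N (x : hK F) n : rv_eq N x 1 -> rv_eq N (x ^+ n) 1.
Proof.
move=> h; elim: n => [|n IH]; first exact: rv_refl.
by rewrite exprS -(mulr1 1); apply: rv_mul.
Qed.

Lemma sub_cat (T : eqType) (a b c : seq T) : {subset a ++ b <= c} -> {subset a <= c} /\ {subset b <= c}.
Proof. by move=> h; split=> x hx; apply: h; rewrite mem_cat hx ?orbT. Qed.

Section Sem.
Variables (L : lang) (M : structure L) (yv k : nat) (Ns : seq nat) (e e' : env M).
Local Notation K := (hK (sF M)).
Local Notation w := (e' VFs yv).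
Hypothesis Hw : w != 0.
Hypothesis He : e VFs yv = w^-1.
Hypothesis Hag : forall s j, j != k -> (s, j) != (VFs, yv) -> e' s j = e s j.
Hypothesis Hxi : forall N, N \in Ns -> rv_eq N (e' (RVs N) k * w) 1.

Lemma eval_vpow n : eval e' (vpow L yv n) = w ^+ n.
Proof. by elim: n => [|n IH] //=; rewrite IH exprS. Qed.

Lemma eval_rpow N (a : term L (RVs N)) n : eval e' (rpow a n) = eval e' a ^+ n.
Proof. by elim: n => [|n IH] //=; rewrite IH exprS. Qed.

Lemma tr_sem : forall s (t : term L s), (tidx t <= k)%N -> {subset tNs t <= Ns} ->
  match s with
  | VFs => eval e' (tr yv k t) = w ^+ deg yv t * eval e t
  | RVs N => rv_eq N (eval e' (tr yv k t)) (eval e t)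
  end.
Proof.
apply: (@term_mut L (fun s t => (tidx t <= k)%N -> {subset tNs t <= Ns} ->
  match s with
  | VFs => eval e' (tr yv k t) = w ^+ deg yv t * eval e t
  | RVs N => rv_eq N (eval e' (tr yv k t)) (eval e t)
  end)
  (fun ss ts => (tsidx ts <= k)%N -> {subset tsNs ts <= Ns} ->
     trel ss (evals e' (trs yv k ts)) (evals e ts))).
- move=> [|N] i /= hi _.
  + have ik : i != k by rewrite neq_ltn hi.
    case: (eqVneq i yv) => [->|iy] /=.
      by rewrite expr1 He mulfV.
    rewrite expr0 mul1r; apply: Hag => //; rewrite xpair_eqE negb_and iy orbT.
  + rewrite /= Hag //; first exact: rv_refl.
    by rewrite neq_ltn hi.
- by move=> _ _ /=; rewrite mulr0.
- by move=> _ _ /=; rewrite mulr1.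
- move=> a IHa b IHb /=; rewrite geq_max => /andP [ha hb] /sub_cat [sa sb].
  by rewrite !eval_vpow (IHa ha sa) (IHb hb sb) exprD; ring.
- by move=> a IHa /= ha sa; rewrite (IHa ha sa) mulrN.
- move=> a IHa b IHb /=; rewrite geq_max => /andP [ha hb] /sub_cat [sa sb].
  by rewrite (IHa ha sa) (IHb hb sb) exprD; ring.
- by move=> N _ _; exact: rv_refl.
- by move=> N _ _; exact: rv_refl.
- move=> N a IHa b IHb /=; rewrite geq_max => /andP [ha hb] /sub_cat [sa sb].
  exact: rv_mul (IHa ha sa) (IHb hb sb).
- move=> N a IHa /= ha sa.
  have sa' : {subset tNs a <= Ns} by move=> x hx; apply: sa; rewrite inE hx orbT.
  have hN : N \in Ns by apply: sa; rewrite inE eqxx.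
  rewrite eval_rpow (IHa ha sa') /=.
  have -> : w ^+ deg yv a * eval e a * e' (RVs N) k ^+ deg yv a =
            eval e a * (e' (RVs N) k * w) ^+ deg yv a by rewrite exprMn; ring.
  rewrite -[X in rv_eq _ _ X]mulr1; apply: rv_mul; first exact: rv_refl.
  exact: rv_pow1 (Hxi hN).
- move=> N M' a IHa h /= ha sa.
  exact: rv_lower (IHa ha sa) h.
- move=> g ts IH /= hi si.
  by apply: fcongr; apply: trel_map; apply: IH.
- by [].
- move=> s ss t IHt ts IHts /=; rewrite geq_max => /andP [ha hb] /sub_cat [sa sb].
  split; last exact: IHts.
  by case: s t IHt {ha sa} (IHt ha sa).
Qed.

Lemma trV (t : term L VFs) : (tidx t <= k)%N -> {subset tNs t <= Ns} ->
  eval e' (tr yv k t) = w ^+ deg yv t * eval e t.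
Proof. exact: (@tr_sem VFs t). Qed.

Lemma trR N (t : term L (RVs N)) : (tidx t <= k)%N -> {subset tNs t <= Ns} ->
  rv_eq N (eval e' (tr yv k t)) (eval e t).
Proof. exact: (@tr_sem (RVs N) t). Qed.

Lemma trS ss (ts : terms L ss) : (tsidx ts <= k)%N -> {subset tsNs ts <= Ns} ->
  trel ss (evals e' (trs yv k ts)) (evals e ts).
Proof.
elim: ts => [|s ss' t ts IH] //=; rewrite geq_max => /andP [ha hb] /sub_cat [sa sb].
split; last exact: IH.
by case: s t ha sa => [|N] t ha sa //=; exact: trR.
Qed.

Lemma trel_nseq n m (xs ys : seq K) : trel (nseq n (RVs m)) xs ys -> rv_eqs (nseq n m) xs ys.
Proof. by rewrite -map_nseq; exact: trel_map. Qed.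

Lemma rv_iff N (a a' b b' : K) : rv_eq N a' a -> rv_eq N b' b -> (rv_eq N a' b' <-> rv_eq N a b).
Proof.
move=> ha hb; split=> h.
  exact: rv_trans (rv_sym ha) (rv_trans h hb).
exact: rv_trans ha (rv_trans h (rv_sym hb)).
Qed.

Lemma qf_sem (p : formula L) : qf p -> (fidx p <= k)%N -> {subset fNs p <= Ns} ->
  (sat e' (trq yv k p) <-> sat e p).
Proof.
elim: p => //=.
- move=> [|N] a b _; rewrite geq_max => /andP [ha hb] /sub_cat [sa sb] /=.
  + rewrite !eval_vpow (trV ha sa) (trV hb sb) !mulrA -!exprD addnC.
    split=> [h|->] //; apply: (mulfI _ h).
    by rewrite expf_neq0.
  + exact: rv_iff (trR ha sa) (trR hb sb).
- move=> N a b _; rewrite geq_max => /andP [ha hb] /sub_cat [sa sb].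
  have h1 := trR ha sa; have h2 := trR hb sb.
  split; [apply: rv_div (rv_sym h1) (rv_sym h2)|apply: rv_div h1 h2].
- move=> N a b c _; rewrite !geq_max => /and3P [ha hb hc] /sub_cat [sa /sub_cat [sb sc]].
  have h1 := trR ha sa; have h2 := trR hb sb; have h3 := trR hc sc.
  split=> [[x [y [r1 r2 r3]]]|[x [y [r1 r2 r3]]]]; exists x, y; split.
  + exact: rv_trans r1 h1.
  + exact: rv_trans r2 h2.
  + exact: rv_trans r3 h3.
  + exact: rv_trans r1 (rv_sym h1).
  + exact: rv_trans r2 (rv_sym h2).
  + exact: rv_trans r3 (rv_sym h3).
- move=> N d a bs _; rewrite geq_max => /andP [ha hb] /sub_cat [sa sb].
  have h1 := trR ha sa; have h2 := @trel_nseq d.+1 (sqidx N) _ _ (trS hb sb).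
  split=> [[x [cs [r1 r2 r3]]]|[x [cs [r1 r2 r3]]]]; exists x, cs; split=> //.
  + exact: rv_trans r1 h1.
  + exact: (@rv_eqs_trans _ (nseq d.+1 (sqidx N)) _ _ _ r2 h2).
  + exact: rv_trans r1 (rv_sym h1).
  + exact: (@rv_eqs_trans _ (nseq d.+1 (sqidx N)) _ _ _ r2 (rv_eqs_sym h2)).
- move=> r ts _ hi si; apply: rcongr; apply: trel_map; exact: trS.
- by move=> p IH hq hi si; rewrite IH.
- move=> p IHp q IHq /andP [hp hq]; rewrite geq_max => /andP [ip iq] /sub_cat [sp sq].
  by rewrite IHp // IHq.
- move=> p IHp q IHq /andP [hp hq]; rewrite geq_max => /andP [ip iq] /sub_cat [sp sq].
  by rewrite IHp // IHq.
Qed.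
End Sem.

Section FV.
Variables (L : lang) (yv k : nat).

Definition G (A : seq var) (B : seq nat) (v : var) : Prop :=
  v \in A \/ v = (VFs, yv) \/ exists2 N, N \in B & v = (RVs N, k).

Lemma G_l A A' B B' v : G A B v -> G (A ++ A') (B ++ B') v.
Proof.
case=> [h|[h|[N h1 h2]]]; [left; by rewrite mem_cat h|by right; left|].
by right; right; exists N => //; rewrite mem_cat h1.
Qed.
Lemma G_r A A' B B' v : G A' B' v -> G (A ++ A') (B ++ B') v.
Proof.
case=> [h|[h|[N h1 h2]]]; [left; by rewrite mem_cat h orbT|by right; left|].
by right; right; exists N => //; rewrite mem_cat h1 orbT.
Qed.
Lemma G_y A B : G A B (VFs, yv). Proof. by right; left. Qed.
Lemma G_cons A B N v : G A B v -> G A (N :: B) v.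
Proof.
case=> [h|[h|[N' h1 h2]]]; [by left|by right; left|].
by right; right; exists N' => //; rewrite inE h1 orbT.
Qed.

Lemma fvt_vpow n v : v \in fvt (vpow L yv n) -> v = (VFs, yv).
Proof. elim: n => [|n IH] //=; rewrite inE => /orP [/eqP //|]; exact: IH. Qed.
Lemma fvt_rpow N (a : term L (RVs N)) n v : v \in fvt (rpow a n) -> v \in fvt a.
Proof. elim: n => [|n IH] //=; rewrite mem_cat => /orP [//|]; exact: IH. Qed.

Lemma fv_tr : forall s (t : term L s) v, v \in fvt (tr yv k t) -> G (fvt t) (tNs t) v.
Proof.
apply: (@term_mut L (fun s t => forall v, v \in fvt (tr yv k t) -> G (fvt t) (tNs t) v)
  (fun ss ts => forall v, v \in fvts (trs yv k ts) -> G (fvts ts) (tsNs ts) v)).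
- move=> [|N] i v /=.
  + by case: (i == yv) => //=; rewrite inE => /eqP ->; left; rewrite inE.
  + by rewrite inE => /eqP ->; left; rewrite inE.
- by [].
- by [].
- move=> a IHa b IHb v /=; rewrite !mem_cat => /orP [/orP [/fvt_vpow ->|/IHa h]|/orP [/fvt_vpow ->|/IHb h]].
  + exact: G_y.
  + exact: G_l.
  + exact: G_y.
  + exact: G_r.
- by move=> a IHa v /= /IHa.
- move=> a IHa b IHb v /=; rewrite !mem_cat => /orP [/IHa h|/IHb h]; [exact: G_l|exact: G_r].
- by [].
- by [].
- move=> N a IHa b IHb v /=; rewrite !mem_cat => /orP [/IHa h|/IHb h]; [exact: G_l|exact: G_r].
- move=> N a IHa v /=; rewrite mem_cat => /orP [/IHa h|/fvt_rpow].
  + exact: G_cons.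
  + by rewrite inE => /eqP ->; right; right; exists N; rewrite ?inE ?eqxx.
- by move=> N M' a IHa h v /= /IHa.
- by move=> g ts IH v /= /IH.
- by [].
- move=> s ss t IHt ts IHts v /=; rewrite !mem_cat => /orP [/IHt h|/IHts h]; [exact: G_l|exact: G_r].
Qed.

Lemma fv_trs ss (ts : terms L ss) v : v \in fvts (trs yv k ts) -> G (fvts ts) (tsNs ts) v.
Proof.
elim: ts v => [|s ss' t ts IH] v //=; rewrite !mem_cat => /orP [/fv_tr h|/IH h]; [exact: G_l|exact: G_r].
Qed.

Lemma fv_trq (p : formula L) v : v \in fv (trq yv k p) -> G (fv p) (fNs p) v.
Proof.
elim: p v => //=.
- move=> [|N] a b v /=; rewrite !mem_cat.
  + move=> /orP [/orP [/fvt_vpow ->|/fv_tr h]|/orP [/fvt_vpow ->|/fv_tr h]].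
    * exact: G_y.
    * exact: G_l.
    * exact: G_y.
    * exact: G_r.
  + move=> /orP [/fv_tr h|/fv_tr h]; [exact: G_l|exact: G_r].
- move=> N a b v; rewrite !mem_cat => /orP [/fv_tr h|/fv_tr h]; [exact: G_l|exact: G_r].
- move=> N a b c v; rewrite !mem_cat => /orP [/fv_tr h|/orP [/fv_tr h|/fv_tr h]].
  + exact: G_l.
  + by apply: G_r; apply: G_l.
  + by apply: G_r; apply: G_r.
- move=> N d a bs v; rewrite !mem_cat => /orP [/fv_tr h|/fv_trs h]; [exact: G_l|exact: G_r].
- by move=> r ts v /fv_trs.
- move=> p IHp q IHq v; rewrite !mem_cat => /orP [/IHp h|/IHq h]; [exact: G_l|exact: G_r].
- move=> p IHp q IHq v; rewrite !mem_cat => /orP [/IHp h|/IHq h]; [exact: G_l|exact: G_r].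
- by move=> s i p IH v h; left.
- by move=> s i p IH v h; left.
Qed.

Lemma fv_exl Ns (body : formula L) v : v \in fv (exl k Ns body) ->
  v \in fv body /\ (forall N, N \in Ns -> v != (RVs N, k)).
Proof.
elim: Ns => [|N Ns IH] //=; rewrite mem_filter => /andP [nv /IH [h1 h2]].
split=> // N'; rewrite inE => /orP [/eqP -> //|]; exact: h2.
Qed.

Lemma fv_cons Ns v : v \in fv (cons_f L yv k Ns) -> v = (VFs, yv) \/ exists2 N, N \in Ns & v = (RVs N, k).
Proof.
elim: Ns => [|N Ns IH] //=; rewrite !inE => /orP [/eqP ->|/orP [/eqP ->|/IH]].
- by right; exists N; rewrite ?inE ?eqxx.
- by left.
- by case=> [->|[N' h1 h2]]; [left|right; exists N' => //; rewrite inE h1 orbT].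
Qed.

Lemma fv_base (p : formula L) v : v \in fv (base yv k p) -> v = (VFs, yv) \/ v \in fv p.
Proof.
move=> /fv_exl [] /=; rewrite inE mem_cat => /orP [/eqP ->|/orP [/fv_cons|/fv_trq]].
- by left.
- case=> [->|[N h1 ->] /(_ N h1)]; [by left|by rewrite eqxx].
- case=> [h _|[-> _|[N h1 ->] /(_ N h1)]]; [by right|by left|by rewrite eqxx].
Qed.

Lemma fv_Tr (p : formula L) v : v \in fv (Tr yv k p) -> v = (VFs, yv) \/ v \in fv p.
Proof.
elim: p v => [||s a b|N a b|N a b c|N d a bs|r ts|q _|q _ r _|q _ r _|s i q IH|s i q _] v;
  try exact: fv_base.
case: s => [|n]; first exact: fv_base.
rewrite /= !mem_filter => /andP [nv /IH [->|h]]; [by left|by right; rewrite nv h].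
Qed.

Lemma qf_trq (p : formula L) : qf p -> qf (trq yv k p).
Proof.
elim: p => //=.
- by case.
- by move=> p IHp q IHq /andP [/IHp -> /IHq ->].
- by move=> p IHp q IHq /andP [/IHp -> /IHq ->].
Qed.

Lemma qf_cons Ns : qf (cons_f L yv k Ns).
Proof. by elim: Ns. Qed.

Lemma esimple_exl Ns (body : formula L) : qf body -> esimple (exl k Ns body).
Proof. by elim: Ns => [|N Ns IH] /= h; [case: body h|exact: IH]. Qed.

Lemma esimple_Tr (p : formula L) : esimple p -> esimple (Tr yv k p).
Proof.
have hb : forall q : formula L, qf q -> esimple (base yv k q).
  by move=> q hq; rewrite /base; apply: esimple_exl; rewrite /= qf_cons qf_trq.
elim: p => [||s a b|N a b|N a b c|N d a bs|r ts|q _|q _ r _|q _ r _|s i q IH|s i q _];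
  try exact: hb.
by case: s.
Qed.
End FV.

Section Sem2.
Variables (L : lang) (M : structure L) (yv k : nat).
Local Notation K := (hK (sF M)).

Lemma exl_elim Ns (body : formula L) (e0 : env M) : sat e0 (exl k Ns body) ->
  exists e1 : env M, (forall s j, j != k -> e1 s j = e0 s j) /\ sat e1 body.
Proof.
elim: Ns e0 => [|N Ns IH] e0 /=; first by move=> h; exists e0.
move=> [a /IH [e1 [h1 h2]]]; exists e1; split=> // s j jk.
by rewrite h1 // /upd xpair_eqE (negPf jk) andbF.
Qed.

Fixpoint chain (e0 : env M) (v : K) (Ns : seq nat) : env M :=
  match Ns with [::] => e0 | N :: Ns => chain (upd e0 (RVs N) k v) v Ns end.

Lemma chain_sat Ns (body : formula L) e0 v : sat (chain e0 v Ns) body -> sat e0 (exl k Ns body).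
Proof. by elim: Ns e0 => [|N Ns IH] e0 //= h; exists v; exact: IH. Qed.

Lemma chain_off Ns e0 v s j : j != k -> chain e0 v Ns s j = e0 s j.
Proof.
move=> jk; elim: Ns e0 => [|N Ns IH] e0 //=.
by rewrite IH /upd xpair_eqE (negPf jk) andbF.
Qed.

Lemma chain_keep Ns e0 v N : e0 (RVs N) k = v -> chain e0 v Ns (RVs N) k = v.
Proof.
elim: Ns e0 => [|N' Ns IH] e0 //= h; apply: IH.
by rewrite /upd; case: ifP.
Qed.

Lemma chain_on Ns e0 v N : N \in Ns -> chain e0 v Ns (RVs N) k = v.
Proof.
elim: Ns e0 => [|N' Ns IH] e0 //=; rewrite inE => /orP [/eqP <-|h]; last exact: IH.
by apply: chain_keep; rewrite /upd eqxx.
Qed.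

Lemma cons_sat Ns (e1 : env M) : sat e1 (cons_f L yv k Ns) <->
  (forall N, N \in Ns -> rv_eq N (e1 (RVs N) k * e1 VFs yv) 1).
Proof.
elim: Ns => [|N Ns IH] /=; first by split.
rewrite IH; split=> [[h1 h2] N'|h]; first by rewrite inE => /orP [/eqP -> //|]; exact: h2.
by split; [apply: h; rewrite inE eqxx|move=> N' hN; apply: h; rewrite inE hN orbT].
Qed.

Lemma base_sem (p : formula L) (e e' : env M) : qf p -> (fidx p <= k)%N -> (yv < k)%N ->
  e VFs yv = (e' VFs yv)^-1 ->
  (forall s j, j != k -> (s, j) != (VFs, yv) -> e' s j = e s j) ->
  (sat e' (base yv k p) <-> e' VFs yv != 0 /\ sat e p).
Proof.
move=> hq hi hy He Hag; have yk : yv != k by rewrite neq_ltn hy.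
split.
  move=> /exl_elim [e1 [ag [nz [/cons_sat cs tq]]]].
  have w1 : e1 VFs yv = e' VFs yv by rewrite ag.
  have nz' : e' VFs yv != 0 by rewrite -w1; apply/eqP.
  split=> //.
  have Hw1 : e1 VFs yv != 0 by rewrite w1.
  have He1 : e VFs yv = (e1 VFs yv)^-1 by rewrite w1.
  have Hag1 : forall s j, j != k -> (s, j) != (VFs, yv) -> e1 s j = e s j.
    by move=> s j jk hs; rewrite ag // Hag.
  have Hxi1 : forall N, N \in fNs p -> rv_eq N (e1 (RVs N) k * e1 VFs yv) 1 by [].
  by apply/(qf_sem Hw1 He1 Hag1 Hxi1 hq hi (fun x h => h)).
move=> [nz hp]; rewrite /base.
apply: (chain_sat (v := (e' VFs yv)^-1)); split; last split.
- by rewrite /= chain_off //; apply/eqP.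
- apply/cons_sat => N hN; rewrite chain_on // chain_off // mulVf //; exact: rv_refl.
- set e1 := chain e' (e' VFs yv)^-1 (fNs p).
  have w1 : e1 VFs yv = e' VFs yv by rewrite /e1 chain_off.
  have Hw1 : e1 VFs yv != 0 by rewrite w1.
  have He1 : e VFs yv = (e1 VFs yv)^-1 by rewrite w1.
  have Hag1 : forall s j, j != k -> (s, j) != (VFs, yv) -> e1 s j = e s j.
    by move=> s j jk hs; rewrite /e1 chain_off // Hag.
  have Hxi1 : forall N, N \in fNs p -> rv_eq N (e1 (RVs N) k * e1 VFs yv) 1.
    by move=> N hN; rewrite w1 /e1 chain_on // mulVf //; exact: rv_refl.
  by apply/(qf_sem Hw1 He1 Hag1 Hxi1 hq hi (fun x h => h)).
Qed.

Lemma Tr_sem (p : formula L) : forall (e e' : env M), esimple p -> (fidx p <= k)%N -> (yv < k)%N ->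
  e VFs yv = (e' VFs yv)^-1 ->
  (forall s j, j != k -> (s, j) != (VFs, yv) -> e' s j = e s j) ->
  (sat e' (Tr yv k p) <-> e' VFs yv != 0 /\ sat e p).
Proof.
elim: p => [||s a b|N a b|N a b c|N d a bs|r ts|q _|q _ r _|q _ r _|s i q IH|s i q _];
  try exact: base_sem.
case: s => [|n]; first by [].
move=> e e' /= hs; rewrite geq_max => /andP [ii iq] hy He Hag.
have hup : forall (e0 : env M) a, upd e0 (RVs n) i a VFs yv = e0 VFs yv by [].
split.
  move=> [a /IH]; rewrite !hup => /(_ (upd e (RVs n) i a) hs iq hy He) [].
    by move=> s j jk hsj; rewrite /upd; case: ifP => // _; apply: Hag.
  by move=> nz h; split=> //; exists a.
move=> [nz [a h]]; exists a; apply/(IH (upd e (RVs n) i a)) => //.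
by move=> s j jk hsj; rewrite /upd; case: ifP => // _; apply: Hag.
Qed.
End Sem2.
Unset Implicit Arguments.

Theorem lemma4p9 (L : lang) (T : formula L -> Prop) (xs : seq var)
    (theta phi : formula L) (y : nat) :
  estrongly_def T xs theta phi y ->
  forall (phi' : formula L) (y' : nat),
    (VFs, y') \notin xs ->
    {subset fv phi' <= (VFs, y') :: xs} ->
    (forall M : structure L, models T M -> forall (e : env M) (b : hK (sF M)),
       sat (upd e VFs y' b) phi' <->
       exists c, sat (upd e VFs y c) phi /\ c * b = 1) ->
    exists theta' : formula L, estrongly_def T xs theta' phi' y'.
Proof.
move=> [Hth [Hyx Hfth Hfphi Hsem] Hstr] phi' y' Hy' Hfphi' Hphi'.
have [chi0 [Hes0 Hfv0 Hsem0]] := Hstr (FNot (FEq (Var L VFs y) (VZero L))) y isT.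
have nz_of : forall (M : structure L) (c b : hK (sF M)), c * b = 1 -> c != 0.
  by move=> M c b h; apply/eqP=> c0; move: h; rewrite c0 mul0r => /eqP; rewrite eq_sym oner_eq0.
exists chi0; split => //.
  split=> //.
    move=> v h; have := Hfv0 v h; rewrite mem_cat => /orP [//|].
    by rewrite /= eqxx.
  move=> M HM e; split.
    rewrite Hsem0 //; split.
      move=> [c [hphi hnz]]; have nz : c != 0.
        by apply/eqP=> c0; apply: hnz; rewrite /= /upd eqxx c0.
      exists c^-1; apply/Hphi' => //; exists c; split=> //; exact: mulfV.
    move=> [b /Hphi' [] // c [hphi hcb]]; exists c; split=> //=.
    by rewrite /upd eqxx; apply/eqP; exact: nz_of hcb.
  move=> b b' /Hphi' [] // c [hc hcb] /Hphi' [] // c' [hc' hcb'].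
  have ecc : c = c' by apply: (proj2 (Hsem M HM e)) hc hc'.
  subst c'; apply: (mulfI (nz_of _ _ _ hcb)); by rewrite hcb hcb'.
move=> psi y'' Hpsi.
set k := maxn (fidx psi) y''.+1.
have [chi [Hesc Hfvc Hsemc]] := Hstr (Tr y'' k psi) y'' (esimple_Tr y'' k Hpsi).
exists chi; split=> //.
  move=> v h; have := Hfvc v h; rewrite !mem_cat => /orP [->//|].
  rewrite mem_filter => /andP [nv /fv_Tr [ev|hv]]; first by rewrite ev eqxx in nv.
  by rewrite mem_filter nv hv orbT.
move=> M HM e; rewrite Hsemc //.
have key : forall c, sat (upd e VFs y'' c) (Tr y'' k psi) <->
    c != 0 /\ sat (upd e VFs y'' c^-1) psi.
  move=> c.
  have := @Tr_sem L M y'' k psi (upd e VFs y'' c^-1) (upd e VFs y'' c) Hpsi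
    (leq_maxl _ _) (leq_maxr _ _).
  rewrite /upd !eqxx => -> //.
  by move=> s j _ hs; rewrite (negPf hs).
split.
  move=> [c [hphi /key [nz hpsi]]]; exists c^-1; split=> //.
  by apply/Hphi' => //; exists c; split=> //; exact: mulfV.
move=> [b [/Hphi' [] // c [hphi hcb] hpsi]]; exists c; split=> //.
have nz := nz_of _ _ _ hcb.
have eb : b = c^-1 by apply: (mulfI nz); rewrite hcb mulfV.
by apply/key; split=> //; rewrite -eb.
Qed.
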